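(* If $\mathcal{F}$ is a finitary argumentation framework, then there exists a $\mathit{cf1.5}$ extension of $\mathcal{F}$, i.e., $\mathit{cf1.5}(\mathcal{F})\neq\emptyset$.
   Context: An argumentation framework (AF) is $\mathcal{F}=(A_{\mathcal{F}},R_{\mathcal{F}})$ with $R_{\mathcal{F}}\subseteq A_{\mathcal{F}}\times A_{\mathcal{F}}$ (possibly infinite); $a\rightarrow b$ means $(a,b)\in R_{\mathcal{F}}$. $\mathcal{F}$ is finitary if each argument is attacked by only finitely many arguments. $\mathcal{F}|_S=(A_{\mathcal{F}}\cap S,R_{\mathcal{F}}\cap(S\times S))$. $S$ is conflict-free if no $a,b\in S$ have $a\rightarrow b$; a naive extension is a $\subseteq$-maximal conflict-free set. $\mathrm{SCC}(\mathcal{F})$ is the set of strongly connected components of the attack graph (where $b$ is in the component of $a$ iff there are directed attack paths, possibly of length 0, from $a$ to $b$ and from $b$ to $a$). For $X,S\subseteq A_{\mathcal{F}}$, $D_S(X)=\{b\in X:\exists a\in S\setminus X,\ a\rightarrow b\}$. $S\in\mathit{cf1.5}(\mathcal{F})$ iff $S$ is conflict-free and for each $X\in\mathrm{SCC}(\mathcal{F})$, $S\cap X$ is a naive extension of $\mathcal{F}|_{X\setminus D_S(X)}$. *)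

(* Defs.v *)
(* An argumentation framework is a (possibly infinite) type A of
   arguments with an attack relation R : A -> A -> Prop; sets are predicates. *)
From Stdlib Require Import List Relations.

Definition set (A : Type) := A -> Prop.

Section AF.
Context {A : Type} (R : A -> A -> Prop).

Definition finitary : Prop :=
  forall b : A, exists l : list A, forall a : A, R a b -> In a l.

Definition subset (S T : set A) : Prop := forall x, S x -> T x.

(* S conflict-free w.r.t. the attack relation R restricted to Y
   (the restriction F|_Y has arguments Y and attacks R ∩ (Y × Y)) *)
Definition conflict_free_in (Y S : set A) : Prop :=
  subset S Y /\ forall a b, S a -> S b -> Y a -> Y b -> ~ R a b.

Definition conflict_free (S : set A) : Prop :=
  forall a b, S a -> S b -> ~ R a b.

Definition naive_in (Y S : set A) : Prop :=
  conflict_free_in Y S /\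
  forall T, conflict_free_in Y T -> subset S T -> subset T S.

Definition reach (a b : A) : Prop := clos_refl_trans A R a b.

Definition is_SCC (X : set A) : Prop :=
  exists a : A, forall b, X b <-> (reach a b /\ reach b a).

Definition D (S X : set A) : set A :=
  fun b => X b /\ exists a, S a /\ ~ X a /\ R a b.

Definition cf15 (S : set A) : Prop :=
  conflict_free S /\
  forall X, is_SCC X ->
    naive_in (fun b => X b /\ ~ D S X b) (fun b => S b /\ X b).

End AF.

(* Main.v *)
Require Import Defs.
From Stdlib Require Import List Relations.
From Stdlib Require Import Classical ClassicalEpsilon FunctionalExtensionality PropExtensionality ProofIrrelevance Lia Cantor.
From mathcomp Require classical_sets.
Set Bullet Behavior "Strict Subproofs".
Section Compact.
Variable A : Type.
Variable G : (A -> bool) -> A -> Prop.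
Variable sup : A -> list A.
Hypothesis Hdep : forall s t b, (forall a, In a (sup b) -> s a = t a) -> G s b -> G t b.
Hypothesis Hfin : forall L : list A, exists s, forall b, In b L -> G s b.

Definition goodL (L : A * bool -> Prop) := forall (Ls E : list A), exists s : A -> bool,
  (forall x, In x E -> forall v, L (x, v) -> s x = v) /\ forall b, In b Ls -> G s b.

Lemma lits_in (F : (A * bool -> Prop) -> Prop)
  (Ht : forall X Y, F X -> F Y -> (forall z, X z -> Y z) \/ (forall z, Y z -> X z))
  (X0 : A * bool -> Prop) (HX0 : F X0) (Lt : list (A * bool)) :
  (forall l, In l Lt -> exists2 Y, F Y & Y l) ->
  exists2 X, F X & forall l, In l Lt -> X l.
Proof.
  induction Lt as [|e Lt IH]; intros H.
  - exists X0; [exact HX0| intros x []].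
  - destruct IH as [X1 HX1 H1]. { intros; apply H; simpl; auto. }
    destruct (H e (or_introl eq_refl)) as [Y HY HYe].
    destruct (Ht X1 Y HX1 HY) as [HXY|HYX].
    + exists Y; [exact HY|]. intros l [<-|Hl]; auto.
    + exists X1; [exact HX1|]. intros l [<-|Hl]; auto.
Qed.

Definition bsel (P : Prop) : bool := if excluded_middle_informative P then true else false.
Lemma bsel_true P : bsel P = true <-> P.
Proof. unfold bsel; destruct (excluded_middle_informative P); split; intros; try congruence; tauto. Qed.

Definition litlist (U : A * bool -> Prop) (E : list A) : list (A * bool) :=
  flat_map (fun x => (if bsel (U (x, true)) then (x, true) :: nil else nil) ++
                     (if bsel (U (x, false)) then (x, false) :: nil else nil)) E.

Lemma litlist_in U E x v : In x E -> U (x, v) -> In (x, v) (litlist U E).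
Proof.
  intros Hx HU. unfold litlist. apply in_flat_map. exists x. split; auto.
  apply in_or_app. destruct v; [left|right];
  match goal with |- context [bsel ?P] => destruct (bsel P) eqn:E'; [left; reflexivity|] end;
  exfalso; assert (bsel (U (x, _)) = true) by (apply bsel_true; eassumption); congruence.
Qed.

Lemma litlist_sub U E l : In l (litlist U E) -> U l.
Proof.
  unfold litlist. intros H. apply in_flat_map in H. destruct H as [x [_ H]].
  apply in_app_or in H.
  destruct (bsel (U (x, true))) eqn:E1; destruct (bsel (U (x, false))) eqn:E2;
  simpl in H; try apply (proj1 (bsel_true _)) in E1; try apply (proj1 (bsel_true _)) in E2;
  repeat match goal with H : _ \/ _ |- _ => destruct H end;
  subst; auto; simpl in *; try contradiction.
Qed.

Theorem compactness : exists s, forall b, G s b.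
Proof.
  destruct (@classical_sets.Zorn_bigcup (A * bool)%type goodL) as [M [HM Hmax]].
  - intros F HF Ht.
    destruct (classic (exists X, F X)) as [[X0 HX0]|Hne].
    + intros Ls E.
      destruct (lits_in F Ht X0 HX0 (litlist (classical_sets.bigcup F (fun X => X)) E))
        as [X HX HXl].
      { intros l Hl. apply litlist_sub in Hl. destruct Hl as [Y HY HYl]. eauto. }
      destruct (HF X HX Ls E) as [s [Hs1 Hs2]]. exists s; split; auto.
      intros x Hx v Hv. apply Hs1; auto. apply HXl. apply litlist_in; auto.
    + intros Ls E. destruct (Hfin Ls) as [s Hs]. exists s; split; auto.
      intros x _ v [Y HY _]. exfalso; eauto.
  - assert (Htot : forall x, exists v, M (x, v)).
    { intros x. apply NNPP; intros Hn.
      assert (Hb : forall v, ~ goodL (fun l => M l \/ l = (x, v))).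
      { intros v. apply Hmax. split.
        - intros l Hl; left; exact Hl.
        - intros Hs. apply Hn. exists v. apply Hs. right; reflexivity. }
      destruct (not_all_ex_not _ _ (Hb true)) as [Ls1 H1].
      destruct (not_all_ex_not _ _ H1) as [E1 H1'].
      destruct (not_all_ex_not _ _ (Hb false)) as [Ls2 H2].
      destruct (not_all_ex_not _ _ H2) as [E2 H2'].
      destruct (HM (Ls1 ++ Ls2) (E1 ++ E2)) as [s [Hs1 Hs2]].
      destruct (s x) eqn:Esx.
      - apply H1'. exists s. split.
        + intros y Hy w [Hw|Hw]. apply Hs1; auto. apply in_or_app; auto.
          inversion Hw; subst; auto.
        + intros b Hb'; apply Hs2; apply in_or_app; auto.
      - apply H2'. exists s. split.
        + intros y Hy w [Hw|Hw]. apply Hs1; auto. apply in_or_app; auto.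
          inversion Hw; subst; auto.
        + intros b Hb'; apply Hs2; apply in_or_app; auto. }
    exists (fun x => bsel (M (x, true))).
    intros b. destruct (HM (b :: nil) (sup b)) as [s [Hs1 Hs2]].
    apply (Hdep s); [|apply Hs2; left; reflexivity].
    intros a Ha. destruct (Htot a) as [v Hv]. rewrite (Hs1 a Ha v Hv).
    destruct v. symmetry; apply bsel_true; auto.
    destruct (bsel (M (a, true))) eqn:E; auto. apply (proj1 (bsel_true _)) in E.
    pose proof (Hs1 a Ha _ E). pose proof (Hs1 a Ha _ Hv). congruence.
Qed.
End Compact.

Section Main.
Variable A : Type.
Variable R : A -> A -> Prop.
Hypothesis HF : finitary R.

Definition att (b : A) : list A := epsilon (inhabits nil) (fun l => forall a, R a b -> In a l).
Lemma att_spec a b : R a b -> In a (att b).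
Proof.
  unfold att. apply (epsilon_spec (inhabits nil) (fun l => forall a, R a b -> In a l)).
  apply HF.
Qed.

Definition same (a b : A) := reach R a b /\ reach R b a.
Lemma same_refl a : same a a.
Proof. split; apply rt_refl. Qed.
Lemma same_sym a b : same a b -> same b a.
Proof. intros [h1 h2]; split; auto. Qed.
Lemma same_trans a b c : same a b -> same b c -> same a c.
Proof. intros [h1 h2] [h3 h4]; split; eapply rt_trans; eauto. Qed.

Definition rep (b : A) : A := epsilon (inhabits b) (fun r => same r b).
Lemma rep_spec b : same (rep b) b.
Proof.
  unfold rep. apply (epsilon_spec (inhabits b) (fun r => same r b)). exists b; apply same_refl.
Qed.
Lemma rep_eq a b : same a b -> rep a = rep b.
Proof.
  intros H. unfold rep.
  assert (E : (fun r => same r a) = (fun r => same r b)).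
  { apply functional_extensionality; intros r; apply propositional_extensionality; split;
    intros; eauto using same_trans, same_sym. }
  rewrite E. f_equal. apply proof_irrelevance.
Qed.

Fixpoint anc (n : nat) (r : A) : list A :=
  match n with 0 => r :: nil | S n => flat_map att (anc n r) end.

Lemma anc_spec a r : reach R a r -> exists n, In a (anc n r).
Proof.
  intros H. apply clos_rt_rt1n in H. induction H.
  - exists 0; left; reflexivity.
  - destruct IHclos_refl_trans_1n as [n Hn]. exists (S n). simpl.
    apply in_flat_map. exists y; split; auto. apply att_spec; auto.
Qed.

Definition pos (b : A) : nat * nat :=
  epsilon (inhabits (0, 0)) (fun p => nth_error (anc (fst p) (rep b)) (snd p) = Some b).
Lemma pos_spec b : nth_error (anc (fst (pos b)) (rep b)) (snd (pos b)) = Some b.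
Proof.
  unfold pos.
  apply (epsilon_spec (inhabits (0,0)) (fun p => nth_error (anc (fst p) (rep b)) (snd p) = Some b)).
  destruct (anc_spec b (rep b)) as [n Hn].
  - destruct (rep_spec b) as [_ h]; exact h.
  - destruct (In_nth_error _ _ Hn) as [k Hk]. exists (n, k); exact Hk.
Qed.

Definition idx (b : A) : nat := to_nat (pos b).
Lemma idx_inj a b : same a b -> idx a = idx b -> a = b.
Proof.
  intros Hs Hi. unfold idx in Hi.
  assert (Hp : pos a = pos b).
  { rewrite <- (cancel_of_to (pos a)), <- (cancel_of_to (pos b)), Hi; reflexivity. }
  pose proof (pos_spec a) as Ha. pose proof (pos_spec b) as Hb.
  rewrite Hp, (rep_eq a b Hs) in Ha. rewrite Ha in Hb. congruence.
Qed.

Definition eltk (b : A) (k : nat) : A := epsilon (inhabits b) (fun a => same a b /\ idx a = k).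
Definition earl (b : A) : list A := map (eltk b) (seq 0 (idx b)).
Lemma earl_spec a b : same a b -> idx a < idx b -> In a (earl b).
Proof.
  intros Hs Hl. unfold earl. apply in_map_iff. exists (idx a). split.
  - assert (H := epsilon_spec (inhabits b) (fun a' => same a' b /\ idx a' = idx a)
                   (ex_intro _ a (conj Hs eq_refl))).
    fold (eltk b (idx a)) in H. destruct H as [H1 H2].
    apply idx_inj; auto. eapply same_trans; eauto using same_sym.
  - apply in_seq. lia.
Qed.

Definition sup (b : A) : list A := b :: att b ++ earl b.

Definition Gcond (s : A -> bool) (b : A) : Prop :=
  ~ R b b /\ (forall a, R a b -> ~ same a b -> s a = false) /\
  (forall a, same a b -> idx a < idx b -> s a = true -> ~ R a b /\ ~ R b a).

Definition Gc (s : A -> bool) (b : A) : Prop := s b = true <-> Gcond s b.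

Lemma Gcond_ext s t b :
  (forall a, (R a b /\ ~ same a b) \/ (same a b /\ idx a < idx b) -> s a = t a) ->
  Gcond s b -> Gcond t b.
Proof.
  intros Hag [h1 [h2 h3]]. split; [exact h1|split].
  - intros a Hr Hn. rewrite <- Hag by (left; auto). auto.
  - intros a Hs Hl Ht. apply h3; auto. rewrite Hag by (right; auto). auto.
Qed.

Lemma Gc_dep s t b : (forall a, In a (sup b) -> s a = t a) -> Gc s b -> Gc t b.
Proof.
  intros Hag H. unfold Gc.
  assert (Hag' : forall a, (R a b /\ ~ same a b) \/ (same a b /\ idx a < idx b) -> s a = t a).
  { intros a [[h1 _]|[h1 h2]]; apply Hag; right; apply in_or_app.
    - left; apply att_spec; auto.
    - right; apply earl_spec; auto. }
  assert (Hsym : forall a, (R a b /\ ~ same a b) \/ (same a b /\ idx a < idx b) -> t a = s a).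
  { intros; symmetry; auto. }
  rewrite <- (Hag b (or_introl eq_refl)).
  split; intros h.
  - apply (Gcond_ext s t b Hag'). apply H; auto.
  - apply H. apply (Gcond_ext t s b Hsym); auto.
Qed.

Definition prec (a b : A) : Prop :=
  (reach R a b /\ ~ reach R b a) \/ (same a b /\ idx a < idx b).

Lemma prec_irrefl a : ~ prec a a.
Proof. intros [[_ h]|[_ h]]. apply h; apply rt_refl. lia. Qed.

Lemma prec_trans a b c : prec a b -> prec b c -> prec a c.
Proof.
  intros [[h1 h2]|[[h1 h2] h3]] [[h4 h5]|[[h4 h5] h6]].
  - left; split; [eapply rt_trans; eauto|]. intros h; apply h2; eapply rt_trans; eauto.
  - left; split; [eapply rt_trans; eauto|]. intros h; apply h2; eapply rt_trans; eauto.
  - left; split; [eapply rt_trans; eauto|]. intros h; apply h5; eapply rt_trans; eauto.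
  - right; split; [split; eapply rt_trans; eauto|lia].
Qed.

Lemma maxsplit (L : list A) : L <> nil -> exists m L',
  (forall b, In b L <-> b = m \/ In b L') /\ length L' < length L /\
  (forall b, In b L -> ~ prec m b).
Proof.
  induction L as [|x L0 IH]; intros Hne; [congruence|].
  destruct L0 as [|y L1].
  - exists x, nil. split; [|split].
    + intros b; simpl; split; intros [h|h]; auto; try contradiction; left; congruence.
    + simpl; lia.
    + intros b [<-|[]]. apply prec_irrefl.
  - destruct IH as [m0 [L0' [H1 [H2 H3]]]]; [congruence|].
    destruct (classic (prec m0 x)) as [Hp|Hp].
    + exists x, (y :: L1). split; [|split].
      * intros b; simpl; split; intros [h|h]; auto; left; congruence.
      * simpl; lia.
      * intros b [<-|Hb]. apply prec_irrefl. intros Hxb. apply (H3 b Hb).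
        eapply prec_trans; eauto.
    + exists m0, (x :: L0'). split; [|split].
      * intros b. specialize (H1 b). simpl in *. tauto.
      * simpl in *; lia.
      * intros b [<-|Hb]; auto.
Qed.

Lemma Hfin_main : forall L : list A, exists s, forall b, In b L -> Gc s b.
Proof.
  assert (H : forall n L, length L < n -> exists s, forall b, In b L -> Gc s b).
  { induction n as [|n IH]; intros L Hl; [lia|].
    destruct L as [|x L0].
    - exists (fun _ => false); intros b [].
    - destruct (maxsplit (x :: L0)) as [m [L' [H1 [H2 H3]]]]; [congruence|].
      destruct (IH L') as [s Hs]; [simpl in *; lia|].
      set (t := fun a => if bsel (a = m) then bsel (Gcond s m) else s a).
      assert (Htm : t m = bsel (Gcond s m)).
      { unfold t. destruct (bsel (m = m)) eqn:E; auto.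
        exfalso. assert (bsel (m = m) = true) by (apply bsel_true; auto). congruence. }
      assert (Hto : forall a, a <> m -> t a = s a).
      { intros a Ha. unfold t. destruct (bsel (a = m)) eqn:E; auto.
        apply (proj1 (bsel_true _)) in E. contradiction. }
      assert (Gm : Gc t m).
      { unfold Gc. rewrite Htm. split; intros h.
        - apply (proj1 (bsel_true _)) in h. apply (Gcond_ext s t m); auto.
          intros a Ha. symmetry; apply Hto. intros ->.
          destruct Ha as [[_ h']|[_ h']]; [apply h'; apply same_refl|lia].
        - apply bsel_true. apply (Gcond_ext t s m); auto.
          intros a Ha. apply Hto. intros ->.
          destruct Ha as [[_ h']|[_ h']]; [apply h'; apply same_refl|lia]. }
      exists t. intros b Hb. destruct (classic (b = m)) as [->|Hbm]; auto.
      assert (HbL' : In b L') by (apply H1 in Hb; tauto).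
      pose proof (Hs b HbL') as Gb. unfold Gc in *. rewrite Hto by auto.
      assert (Hag : forall a, (R a b /\ ~ same a b) \/ (same a b /\ idx a < idx b) -> s a = t a).
      { intros a Ha. symmetry; apply Hto. intros ->. apply (H3 b Hb).
        destruct Ha as [[h1 h2]|[h1 h2]].
        - left; split. apply rt_step; auto. intros h; apply h2; split; auto. apply rt_step; auto.
        - right; auto. }
      assert (Hag' : forall a, (R a b /\ ~ same a b) \/ (same a b /\ idx a < idx b) -> t a = s a).
      { intros; symmetry; auto. }
      split; intros h.
      + apply (Gcond_ext s t b Hag). apply Gb; auto.
      + apply Gb. apply (Gcond_ext t s b Hag'); auto. }
  intros L. apply (H (S (length L))). lia.
Qed.

Lemma main : exists S : set A, cf15 R S.
Proof.
  destruct (compactness A Gc sup Gc_dep Hfin_main) as [s Hs].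
  exists (fun b => s b = true).
  assert (Hcf : conflict_free R (fun b => s b = true)).
  { intros a b Ha Hb Hr.
    destruct (classic (same a b)) as [Hsm|Hsm].
    - destruct (Arith.Compare_dec.lt_eq_lt_dec (idx a) (idx b)) as [[Hl|He]|Hl].
      + destruct (proj1 (Hs b) Hb) as [_ [_ h]]. destruct (h a Hsm Hl Ha) as [h1 _]; auto.
      + pose proof (idx_inj a b Hsm He); subst. destruct (proj1 (Hs b) Hb) as [h _]; auto.
      + destruct (proj1 (Hs a) Ha) as [_ [_ h]]. destruct (h b (same_sym _ _ Hsm) Hl Hb) as [_ h1]; auto.
    - destruct (proj1 (Hs b) Hb) as [_ [h _]]. rewrite (h a Hr Hsm) in Ha. discriminate. }
  split; [exact Hcf|].
  intros X [r Hr].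
  assert (HXs : forall a b, X a -> X b -> same a b).
  { intros a b Ha Hb. apply Hr in Ha; apply Hr in Hb.
    destruct Ha, Hb. split; eapply rt_trans; eauto. }
  assert (HXs2 : forall a b, X b -> same a b -> X a).
  { intros a b Hb Hab. apply Hr in Hb. apply Hr. destruct Hb, Hab. split; eapply rt_trans; eauto. }
  assert (Hsub : forall b, s b = true -> X b -> ~ D R (fun b => s b = true) X b).
  { intros b Hb HX [_ [a [Ha [HXa Hab]]]].
    destruct (proj1 (Hs b) Hb) as [_ [h _]].
    assert (Hn : ~ same a b) by (intros Hs'; apply HXa; eapply HXs2; eauto).
    rewrite (h a Hab Hn) in Ha. discriminate. }
  split.
  - split.
    + intros b [Hb HX]. split; auto.
    + intros a b [Ha _] [Hb _] _ _. apply Hcf; auto.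
  - intros T [HTY HTcf] HST b HTb.
    destruct (HTY b HTb) as [HXb HDb].
    split; auto.
    apply (proj2 (Hs b)). split; [|split].
    + intros Hbb. apply (HTcf b b HTb HTb (HTY b HTb) (HTY b HTb) Hbb).
    + intros a Hab Hn. destruct (s a) eqn:Ea; auto. exfalso. apply HDb.
      split; auto. exists a. split; auto.
    + intros a Hsm Hl Ha.
      assert (HXa : X a) by (eapply HXs2; eauto).
      assert (HTa : T a) by (apply HST; split; auto).
      pose proof (HTY a HTa) as HYa.
      split; intros Hr'.
      * apply (HTcf a b HTa HTb HYa (HTY b HTb) Hr').
      * apply (HTcf b a HTb HTa (HTY b HTb) HYa Hr').
Qed.
End Main.

Theorem theorem4 (A : Type) (R : A -> A -> Prop) :
  finitary R -> exists S : set A, cf15 R S.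
Proof. intros HF. exact (main A R HF). Qed.
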